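(* Let $n$ be a positive integer with $n\mid (q-1)$, and let $C$ be a cyclic code of length $n$ over $\mathbb{F}_q$ with complete defining set $Z\subseteq R_n$. Suppose $\ell$ is a divisor of $n$ such that $Z$ contains a coset $\beta G$ (with $\beta\in R_n$) of the subgroup $G$ of $R_n$ of order $\ell$, and $R_n\setminus Z$ contains a consecutive set of length $\frac{n}{\ell}-1$. Then the minimum distance of the dual code $C^{\perp}$ is exactly $\frac{n}{\ell}$.
   Context: Let $q$ be a prime power and $n\mid(q-1)$, so that the set $R_n$ of all $n$-th roots of unity is contained in $\mathbb{F}_q$ and is a cyclic group of order $n$; let $\alpha$ be a generator. For any $Z\subseteq R_n$, the cyclic code of length $n$ over $\mathbb{F}_q$ with complete defining set $Z$ is the ideal generated by $\prod_{\beta\in Z}(x-\beta)$ in $\mathbb{F}_q[x]/(x^n-1)$, identified with a subspace of $\mathbb{F}_q^n$ via coefficient vectors. A subset $\Omega\subseteq R_n$ is a consecutive set of length $\ell'$ if there exist a primitive $n$-th root of unity $\beta$ and an integer $i$ with $\Omega=\{\beta^i,\beta^{i+1},\dots,\beta^{i+\ell'-1}\}$. *)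

(* Defs.v *)
From HB Require Import structures.
From mathcomp Require Import all_boot all_order all_algebra.
Set Implicit Arguments. Unset Strict Implicit. Unset Printing Implicit Defensive.
Import Order.TTheory GRing.Theory.
Local Open Scope ring_scope.

Definition roots_unity (F : finFieldType) (n : nat) : {set F} :=
  [set x : F | x ^+ n == 1].

Definition vpoly (F : finFieldType) (n : nat) (c : 'rV[F]_n) : {poly F} :=
  \sum_(i < n) c ord0 i *: 'X^i.

Definition gen_poly (F : finFieldType) (Z : {set F}) : {poly F} :=
  \prod_(b in Z) ('X - b%:P).

(* The cyclic code of length n with complete defining set Z: the ideal
   generated by gen_poly Z in F[x]/(x^n - 1), identified with F^n through
   the canonical representatives of degree < n. *)
Definition cyclic_code (F : finFieldType) (n : nat) (Z : {set F})
  (c : 'rV[F]_n) : Prop :=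
  exists f : {poly F}, vpoly c = (gen_poly Z * f) %% ('X^n - 1).

Definition dual_code (F : finFieldType) (n : nat) (C : 'rV[F]_n -> Prop)
  (v : 'rV[F]_n) : Prop :=
  forall c, C c -> \sum_(i < n) c ord0 i * v ord0 i = 0.

Definition wt (F : finFieldType) (n : nat) (v : 'rV[F]_n) : nat :=
  #|[set i : 'I_n | v ord0 i != 0]|.

Definition min_dist_eq (F : finFieldType) (n : nat) (C : 'rV[F]_n -> Prop)
  (d : nat) : Prop :=
  (exists2 v, C v & (v != 0) && (wt v == d)) /\
  (forall v, C v -> v != 0 -> (d <= wt v)%N).

Definition consecutive_set (F : finFieldType) (n m : nat) (Om : {set F}) : Prop :=
  exists beta : F, exists i : int,
    n.-primitive_root beta /\
    Om = [set beta ^ (i + (j : nat)%:Z) | j : 'I_m].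

Definition is_subgroup_order (F : finFieldType) (n l : nat) (G : {set F}) : Prop :=
  [/\ G \subset roots_unity F n, 1 \in G,
      {in G &, forall x y, x * y \in G} & #|G| = l].

(* Main.v *)
Require Import Defs.
From HB Require Import structures.
From mathcomp Require Import all_boot all_order all_algebra.
From mathcomp Require Import zify.
Set Implicit Arguments. Unset Strict Implicit. Unset Printing Implicit Defensive.
Import Order.TTheory GRing.Theory.
Local Open Scope ring_scope.

Lemma horner_vpoly (F : finFieldType) n (c : 'rV[F]_n) x :
  (vpoly c).[x] = \sum_(i < n) c ord0 i * x ^+ i.
Proof.
rewrite /vpoly horner_sum; apply: eq_bigr => i _.
by rewrite hornerZ hornerXn.
Qed.

Lemma code_eval (F : finFieldType) n (Z : {set F}) (c : 'rV[F]_n) x :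
  @cyclic_code F n Z c -> x \in Z -> x ^+ n = 1 ->
  \sum_(i < n) c ord0 i * x ^+ i = 0.
Proof.
move=> [f Hf] xZ xn; rewrite -horner_vpoly Hf.
have := divp_eq (gen_poly Z * f) ('X^n - 1).
move/(congr1 (fun p => p.[x])) => /=.
move=> H; rewrite !hornerE xn subrr mulr0 add0r in H.
rewrite -H /gen_poly horner_prod.
by rewrite (bigD1 x) //= hornerXsubC subrr !mul0r.
Qed.

Lemma size_vpoly (F : finFieldType) n (c : 'rV[F]_n) : (size (vpoly c) <= n)%N.
Proof.
rewrite /vpoly; apply: (big_ind (fun p : {poly F} => size p <= n)%N).
- by rewrite size_poly0.
- by move=> p q Hp Hq; apply: leq_trans (size_polyD _ _) _; rewrite geq_max Hp Hq.
- by move=> i _; apply: leq_trans (size_scale_leq _ _) _; rewrite size_polyXn.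
Qed.

Lemma card_nat0 (F : finFieldType) : (#|F|%:R : F) = 0.
Proof.
have H : \sum_(x : F) x = \sum_(x : F) (x + 1).
  by apply: (reindex_inj (addIr (1 : F))).
move: H; rewrite big_split /= sumr_const => /eqP.
by rewrite -subr_eq0 opprD addrA subrr add0r oppr_eq0 => /eqP.
Qed.

Lemma natr_ndiv (F : finFieldType) k : (k %| #|F|.-1)%N -> (k%:R : F) != 0.
Proof.
move=> kq; apply/negP => /eqP k0.
have k_gt0 : (0 < k)%N.
  rewrite lt0n; apply/negP => /eqP k0'; move: kq; rewrite k0' dvd0n.
  by have := card_finNzRing_gt1 F; case: #|F| => [|[|m]].
have [p pch] := natf0_pchar k_gt0 (introT eqP k0).
have pk : (p %| k)%N by rewrite (dvdn_pcharf pch) k0.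
have pq : (p %| #|F|)%N by rewrite (dvdn_pcharf pch) card_nat0.
have p1 : (p %| 1)%N.
  have q1 : #|F| = (#|F|.-1 + 1)%N by rewrite addn1 prednK // (ltn_trans _ (card_finNzRing_gt1 F)).
  by rewrite -(dvdn_addl 1 (dvdn_trans pk kq)) addnC -q1.
by move: (pcharf_prime pch); rewrite dvdn1 in p1; rewrite (eqP p1).
Qed.

Lemma card_mult n l : (0 < n)%N -> (l %| n)%N ->
  #|[set i : 'I_n | (l %| i)%N]| = (n %/ l)%N.
Proof.
move=> n0 ln.
rewrite cardsE -sum1_card big_mkcond /=.
rewrite (eq_bigr (fun i : 'I_n => nat_of_bool (l %| i)%N)); last first.
  move=> i _; rewrite -topredE /= /dvdn; by case: (i %% l)%N.
rewrite -(big_mkord xpredT (fun i => nat_of_bool (l %| i)%N)) divn_count_dvd.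
rewrite big_nat_recr //= ln.
case: n n0 {ln} => // n _.
by rewrite big_ltn // dvdn0 addnC.
Qed.

Section Grp.
Variables (F : finFieldType) (n : nat) (G : {set F}).
Hypotheses (n0 : (0 < n)%N) (GR : G \subset roots_unity F n) (G1 : 1 \in G)
  (GM : {in G &, forall x y, x * y \in G}).

Lemma grp_neq0 x : x \in G -> x != 0.
Proof.
move=> /(subsetP GR); rewrite inE => /eqP xn; apply/eqP => x0.
by move: xn; rewrite x0 expr0n eqn0Ngt n0 /= => /eqP; rewrite eq_sym oner_eq0.
Qed.

Lemma grp_shift x : x \in G -> [set x * g | g in G] = G.
Proof.
move=> xG; apply/eqP; rewrite eqEcard card_imset ?leqnn ?andbT.
  by apply/subsetP => y /imsetP [g gG ->]; exact: GM.
exact: mulfI (grp_neq0 xG).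
Qed.

Lemma grp_sum x (f : F -> F) : x \in G ->
  \sum_(g in G) f (x * g) = \sum_(g in G) f g.
Proof.
move=> xG; rewrite -big_imset ?grp_shift //.
by move=> a b _ _ /(mulfI (grp_neq0 xG)).
Qed.

Lemma grp_prod x (f : F -> F) : x \in G ->
  \prod_(g in G) f (x * g) = \prod_(g in G) f g.
Proof.
move=> xG; rewrite -big_imset ?grp_shift //.
by move=> a b _ _ /(mulfI (grp_neq0 xG)).
Qed.

Lemma grp_exp x : x \in G -> x ^+ #|G| = 1.
Proof.
move=> xG; have := grp_prod id xG; rewrite big_split /= prodr_const.
have P0 : \prod_(g in G) g != 0 by apply/prodf_neq0 => g; exact: grp_neq0.
by move/eqP; rewrite -{2}(mul1r (\prod_(g in G) g)) (inj_eq (mulIf P0)) => /eqP.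
Qed.

Lemma grp_sum_pow i :
  \sum_(g in G) g ^+ i = if (#|G| %| i)%N then #|G|%:R else 0.
Proof.
case: ifP => Hd.
  rewrite (eq_bigr (fun _ => 1)) ?sumr_const //.
  by move=> g gG; rewrite -(divnK Hd) mulnC exprM grp_exp // expr1n.
have [x xG xi] : exists2 x, x \in G & x ^+ i != 1.
  apply/exists_inP; apply: contraFT Hd; rewrite negb_exists_in => /forall_inP H.
  set r := (i %% #|G|)%N.
  have Hr : {in G, forall g, g ^+ r = 1}.
    move=> g gG; move/negbNE: (H g gG) => /eqP.
    by rewrite {1}(divn_eq i #|G|) exprD mulnC exprM grp_exp // expr1n mul1r.
  case: (boolP (#|G| %| i)%N) => // nd.
  have G0 : (0 < #|G|)%N by apply/card_gt0P; exists 1.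
  have r0 : (0 < r)%N by rewrite lt0n.
  pose p : {poly F} := 'X^r - 1.
  have: (size (enum G) < size p)%N.
    apply: max_poly_roots.
    - by rewrite -size_poly_eq0 /p size_XnsubC.
    - by apply/allP => g; rewrite mem_enum => gG; rewrite rootE /p !hornerE Hr // subrr.
    - exact: enum_uniq.
  by rewrite /p size_XnsubC // -cardE ltnS leqNgt ltn_mod G0.
have : \sum_(g in G) (x * g) ^+ i = \sum_(g in G) g ^+ i.
  exact: (grp_sum (fun y => y ^+ i)).
under eq_bigr do rewrite exprMn.
rewrite -mulr_sumr => /eqP; rewrite -subr_eq0 -{2}(mul1r (\sum_(g in G) _)) -mulrBl.
by rewrite mulf_eq0 subr_eq0 (negPf xi) => /eqP.
Qed.
End Grp.


Lemma bch (F : finFieldType) n (b : F) m (u : 'I_n -> F) :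
  n.-primitive_root b ->
  (forall j, (j < m)%N -> \sum_(s < n) u s * (b ^+ (n.-1 - s)) ^+ j = 0) ->
  forall t, u t != 0 -> (m < #|[set s | u s != 0%R]|)%N.
Proof.
move=> pb Hj t ut; rewrite ltnNge; apply/negP => Hm.
set S := [set s | u s != 0].
pose a (s : 'I_n) := b ^+ (n.-1 - s).
have ainj : forall s s', a s = a s' -> s = s'.
  move=> s s' /eqP; rewrite /a (eq_prim_root_expr pb) => /eqP.
  have hs := ltn_ord s; have hs' := ltn_ord s'.
  rewrite !modn_small; try lia.
  by move=> h; apply/val_inj => /=; lia.
pose P : {poly F} := \prod_(s <- enum (S :\ t)) ('X - (a s)%:P).
have tS : t \in S by rewrite inE.
have sP : size P = #|S| by rewrite size_prod_XsubC -cardE (cardsD1 t S) tS.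
have E0 : \sum_(s < n) u s * P.[a s] = 0.
  under eq_bigr do rewrite horner_coef mulr_sumr.
  rewrite exchange_big /= big1 // => j _.
  under eq_bigr do rewrite mulrCA.
  rewrite -mulr_sumr (Hj j) ?mulr0 //.
  by apply: leq_trans (ltn_ord j) _; rewrite sP.
move: E0; rewrite (bigD1 t) //= big1 ?addr0.
  apply/eqP; rewrite mulf_eq0 negb_or ut /= /P horner_prod.
  rewrite prodf_seq_neq0; apply/allP => s; rewrite mem_enum => sSt /=.
  rewrite hornerXsubC subr_eq0; apply/eqP => /ainj st.
  by move: sSt; rewrite st !inE eqxx.
move=> s st; case: (eqVneq (u s) 0) => [->|us]; first by rewrite mul0r.
rewrite /P horner_prod (big_rem s) /=.
  by rewrite hornerXsubC subrr mul0r mulr0.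
by rewrite mem_enum !inE st us.
Qed.

Lemma cw_in (F : finFieldType) n (Z : {set F}) (w : F) :
  (0 < n)%N -> Z \subset roots_unity F n -> w ^+ n = 1 -> w \notin Z ->
  @cyclic_code F n Z (\row_(s < n) w ^+ (n.-1 - s)).
Proof.
move=> n0 ZR wn wZ; set c := \row_(s < n) _.
have dv : gen_poly Z %| vpoly c.
  rewrite /gen_poly -big_enum /=; apply: uniq_roots_dvdp; last first.
    by rewrite uniq_rootsE enum_uniq.
  apply/allP => z; rewrite mem_enum => zZ.
  have /eqP zn : z ^+ n == 1 by move: (subsetP ZR z zZ); rewrite inE.
  have wz : w - z != 0 by rewrite subr_eq0; apply: contraNneq wZ => ->.
  rewrite rootE horner_vpoly.
  have := subrXX w z n; rewrite wn zn subrr => /esym /eqP.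
  rewrite mulf_eq0 (negPf wz) /= => /eqP H.
  rewrite -[X in _ == X]H; apply/eqP.
  by apply: eq_bigr => s _; rewrite mxE.
exists (vpoly c %/ gen_poly Z); rewrite mulrC divpK // modp_small //.
by rewrite -polyC1 size_XnsubC // ltnS size_vpoly.
Qed.

Theorem proposition2p8 (F : finFieldType) (n : nat) (Z : {set F}) (l : nat)
  (G : {set F}) (beta : F) :
  (0 < n)%N -> (n %| #|F|.-1)%N ->
  Z \subset roots_unity F n ->
  (l %| n)%N ->
  is_subgroup_order n l G ->
  beta \in roots_unity F n ->
  [set beta * x | x in G] \subset Z ->
  (exists Om : {set F}, Om \subset roots_unity F n :\: Z /\
     consecutive_set n (n %/ l).-1 Om) ->
  min_dist_eq (dual_code (@cyclic_code F n Z)) (n %/ l).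
Proof.
move=> n0 nq ZR ln [GR G1 GM cG] bR bZ [Om [OmS [b [i [pb OmE]]]]].
have l0 : (0 < l)%N := dvdn_gt0 n0 ln.
have d0 : (0 < n %/ l)%N by rewrite divn_gt0 // dvdn_leq.
have Rn0 : forall x, x \in roots_unity F n -> x != 0.
  move=> x; rewrite inE => /eqP xn; apply/eqP => x0.
  by move: xn; rewrite x0 expr0n eqn0Ngt n0 /= => /eqP; rewrite eq_sym oner_eq0.
split.
- pose v := \row_(k < n) (if (l %| k)%N then beta ^+ k else 0).
  exists v.
    move=> c cC.
    have lF : (l%:R : F) != 0 by apply: natr_ndiv; exact: dvdn_trans nq.
    apply: (mulfI lF); rewrite mulr0 mulr_sumr.
    transitivity (\sum_(k < n) \sum_(g in G) c ord0 k * (beta * g) ^+ k).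
      apply: eq_bigr => k _.
      under eq_bigr do rewrite exprMn mulrA.
      rewrite -mulr_sumr (grp_sum_pow n0 GR G1 GM) cG mxE.
      by case: ifP => _; rewrite ?mulr0 // mulrC.
    rewrite exchange_big /= big1 // => g gG.
    apply: code_eval cC _ _.
      by apply: (subsetP bZ); apply: imset_f.
    move: bR (subsetP GR g gG); rewrite !inE => /eqP bn /eqP gn.
    by rewrite exprMn bn gn mulr1.
  apply/andP; split.
    apply/eqP => /matrixP /(_ ord0 (Ordinal n0)); rewrite !mxE /= dvdn0 expr0.
    by move/eqP; rewrite oner_eq0.
  rewrite /wt -(card_mult n0 ln); apply/eqP/eq_card => k; rewrite !inE mxE.
  by case: ifP => _; rewrite ?eqxx // expf_neq0 // Rn0.
- move=> v vD vn0.
  have [t vt] : exists t, v ord0 t != 0.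
    apply/existsP; apply: contraNT vn0; rewrite negb_exists => /forallP H.
    by apply/eqP/matrixP => x y; rewrite ord1 mxE; apply/eqP; move/negbNE: (H y).
  rewrite /wt -(prednK d0).
  have b0 : b != 0.
    by apply: Rn0; rewrite inE (prim_expr_order pb).
  set B := b ^ i.
  have B0 : B != 0 by rewrite /B expfz_neq0.
  set m := (n %/ l).-1.
  pose u (s : 'I_n) := v ord0 s * B ^+ (n.-1 - s).
  have -> : [set k | v ord0 k != 0] = [set s | u s != 0].
    by apply/setP => s; rewrite !inE mulf_eq0 negb_or expf_neq0 // andbT.
  apply: (bch pb) (t) _; last by rewrite /u mulf_neq0 // expf_neq0.
  move=> j jm.
  pose w := b ^ (i + (j : nat)%:Z).
  have wOm : w \in Om by rewrite OmE; apply/imsetP; exists (Ordinal jm).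
  have := subsetP OmS w wOm; rewrite !inE => /andP [wZ /eqP wn].
  have := vD _ (cw_in n0 ZR wn wZ).
  have wE : w = B * b ^+ j by rewrite /w exprzDr ?unitfE.
  move=> H; rewrite -[RHS]H; apply: eq_bigr => s _; rewrite mxE wE exprMn /u.
  by rewrite -!exprM mulnC [in RHS]mulrC mulrA.
Qed.
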